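(* As $\mathbb F_3$-subspaces of the space of functions $\mathbb F_{3^{2m}}\to\mathbb F_3$, \[ \big\langle \mathrm{Tr}_{2m}(at^{3^m+1})\,\mathrm{Tr}_{2m}(bt) : a\in\mathbb F_{3^m}^*,\ b\in\mathbb F_{3^{2m}}\big\rangle_{\mathbb F_3}=\Big\{\sum_{i=0}^{m-1}\mathrm{Tr}_{2m}\big(c_it^{(3^m+1)3^i+1}\big): c_0,\dots,c_{m-1}\in\mathbb F_{3^{2m}}\Big\}. \]
   Context: $m\ge2$ is an integer; $\mathrm{Tr}_{2m}:\mathbb F_{3^{2m}}\to\mathbb F_3$ is the absolute trace $x\mapsto\sum_{i=0}^{2m-1}x^{3^i}$; $\mathbb F_{3^m}\subseteq\mathbb F_{3^{2m}}$; each expression is regarded as a function of $t\in\mathbb F_{3^{2m}}$, with pointwise products; $\langle\cdot\rangle_{\mathbb F_3}$ denotes $\mathbb F_3$-linear span. *)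

(* Defs.v *)
From mathcomp Require Import all_boot all_algebra all_field.
Set Implicit Arguments. Unset Strict Implicit. Unset Printing Implicit Defensive.
Import GRing.Theory.
Local Open Scope ring_scope.

(* Absolute trace Tr_{2m} : F -> F_3, with F_3 viewed as the prime subfield of F
   (F is a field of order 3^(2m), so its prime subfield is F_3). *)
Definition trace2m (F : finFieldType) (m : nat) (x : F) : F :=
  \sum_(i < (2 * m)%N) x ^+ (3 ^ i).

Definition embF3 (F : finFieldType) (k : 'F_3) : F := (nat_of_ord k)%:R.

Definition in_F3span (F : finFieldType) (S : (F -> F) -> Prop) (g : F -> F) : Prop :=
  exists (n : nat) (k : 'I_n -> 'F_3) (fs : 'I_n -> F -> F),
    (forall i, S (fs i)) /\
    (forall t, g t = \sum_(i < n) embF3 F (k i) * fs i t).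

Definition gen_family (F : finFieldType) (m : nat) (f : F -> F) : Prop :=
  exists a b : F, a ^+ (3 ^ m) = a /\ a != 0 /\
    (forall t, f t = trace2m m (a * t ^+ (3 ^ m + 1)) * trace2m m (b * t)).

Definition rhs_set (F : finFieldType) (m : nat) (g : F -> F) : Prop :=
  exists c : 'I_m -> F,
    forall t, g t = \sum_(i < m) trace2m m (c i * t ^+ ((3 ^ m + 1) * 3 ^ i + 1)).

(* Main.v *)
Require Import Defs.
From mathcomp Require Import all_boot all_algebra all_field.
From mathcomp Require Import ring zify.
From mathcomp Require cyclic.
Set Implicit Arguments. Unset Strict Implicit. Unset Printing Implicit Defensive.
Import GRing.Theory.
Local Open Scope ring_scope.

Lemma frobD (F : finFieldType) (h3 : 3%N \in [pchar F]) k (x y : F) :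
  (x + y) ^+ (3 ^ k) = x ^+ (3 ^ k) + y ^+ (3 ^ k).
Proof.
apply: exprDn_pchar; rewrite pnatX orbC; apply/orP; right.
by rewrite pnatE.
Qed.

Lemma frob_sum (F : finFieldType) (h3 : 3%N \in [pchar F]) k I (r : seq I) (P : pred I) (f : I -> F) :
  (\sum_(i <- r | P i) f i) ^+ (3 ^ k) = \sum_(i <- r | P i) (f i) ^+ (3 ^ k).
Proof.
apply: (big_morph (fun x => x ^+ (3 ^ k))).
  by move=> x y; apply: frobD.
by rewrite expr0n expn_eq0.
Qed.

Lemma trD (F : finFieldType) (h3 : 3%N \in [pchar F]) m (x y : F) :
  trace2m m (x + y) = trace2m m x + trace2m m y.
Proof. by rewrite /trace2m -big_split; apply: eq_bigr => i _; apply: frobD. Qed.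

Lemma tr0 (F : finFieldType) m : trace2m m (0 : F) = 0.
Proof. by rewrite /trace2m big1 // => i _; rewrite expr0n expn_eq0. Qed.

Lemma trN (F : finFieldType) (h3 : 3%N \in [pchar F]) m (x : F) :
  trace2m m (- x) = - trace2m m x.
Proof.
apply/eqP; rewrite -addr_eq0 -trD // addNr; exact/eqP/tr0.
Qed.

Lemma tr_sum (F : finFieldType) (h3 : 3%N \in [pchar F]) m I (r : seq I) (P : pred I) (f : I -> F) :
  trace2m m (\sum_(i <- r | P i) f i) = \sum_(i <- r | P i) trace2m m (f i).
Proof.
apply: (big_morph (trace2m m)); first by move=> x y; apply: trD.
exact: tr0.
Qed.

Lemma emb_cube (F : finFieldType) (h3 : 3%N \in [pchar F]) (k : 'F_3) :
  (embF3 F k) ^+ 3 = embF3 F k.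
Proof.
rewrite /embF3; have : (k < 3)%N := ltn_ord k.
case: k => [[|[|[|]]]] //= _ _; rewrite ?expr0n ?expr1n //.
rewrite -natrX (_ : (2 ^ 3 = 2 + 3 * 2)%N) // natrD natrM (pcharf0 h3) mul0r addr0 //.
Qed.

Lemma emb_frob (F : finFieldType) (h3 : 3%N \in [pchar F]) (k : 'F_3) j :
  (embF3 F k) ^+ (3 ^ j) = embF3 F k.
Proof.
elim: j => [|j IH]; first by rewrite expr1.
by rewrite expnS exprM emb_cube.
Qed.

Lemma trZ (F : finFieldType) (h3 : 3%N \in [pchar F]) m (k : 'F_3) (x : F) :
  trace2m m (embF3 F k * x) = embF3 F k * trace2m m x.
Proof.
rewrite /trace2m mulr_sumr; apply: eq_bigr => i _.
by rewrite exprMn emb_frob.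
Qed.

Lemma key (F : finFieldType) (h3 : 3%N \in [pchar F]) m
  (hq : forall x : F, x ^+ (3 ^ (2 * m)) = x) (a b t : F) : a ^+ (3 ^ m) = a ->
  trace2m m (a * t ^+ (3 ^ m + 1)) * trace2m m (b * t) =
  - \sum_(i < m) trace2m m (a ^+ (3 ^ i) * b * t ^+ ((3 ^ m + 1) * 3 ^ i + 1)).
Proof.
move=> ha.
set A := a * t ^+ (3 ^ m + 1).
have hA : A ^+ (3 ^ m) = A.
  rewrite /A exprMn ha -exprM mulnDl mul1n -expnD addnn -mul2n exprD hq.
  rewrite exprD expr1; ring.
set T := \sum_(j < m) A ^+ (3 ^ j).
have hT1 : T ^+ 3 = T.
  rewrite -(expn1 3) frob_sum //.
  have E : A ^+ (3 ^ 0) + \sum_(j < m) A ^+ (3 ^ j.+1) = T + A.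
    have E1 := big_ord_recl m (fun j : 'I_m.+1 => A ^+ (3 ^ j)).
    have E2 := big_ord_recr m (fun j : 'I_m.+1 => A ^+ (3 ^ j)).
    by rewrite /= hA in E2; rewrite -E2 E1.
  rewrite expn0 expr1 in E.
  apply: (@addIr _ A); rewrite -/T.
  under eq_bigr => j _ do rewrite -exprM -expnSr.
  by rewrite addrC -E.
have hTk : forall k, T ^+ (3 ^ k) = T.
  by elim=> [|k IH]; [rewrite expr1 | rewrite expnS exprM hT1].
have hTr : trace2m m A = - T.
  rewrite /trace2m mul2n -addnn big_split_ord /=.
  under [X in _ + X = _]eq_bigr => j _ do rewrite expnD exprM hA.
  have h : T *+ 3 = 0 by rewrite -mulr_natl (pcharf0 h3) mul0r.
  move: h; rewrite !mulrS mulr0n addr0 => h.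
  by change (T + T = - T); apply/eqP; rewrite -subr_eq0 opprK -addrA h.
rewrite hTr mulNr; congr (- _).
set B := b * t.
have E : forall i : 'I_m, trace2m m (a ^+ (3 ^ i) * b * t ^+ ((3 ^ m + 1) * 3 ^ i + 1))
   = trace2m m (A ^+ (3 ^ i) * B).
  move=> i; congr trace2m; rewrite /A /B exprMn -exprM exprD expr1.
  ring.
under eq_bigr => i _ do rewrite E.
rewrite /trace2m.
under eq_bigr => i _ do under eq_bigr => k _ do rewrite exprMn.
rewrite exchange_big /= mulr_sumr; apply: eq_bigr => k _.
by rewrite -mulr_suml -frob_sum // hTk.
Qed.

Lemma rhs_ext (F : finFieldType) m (g g' : F -> F) :
  rhs_set m g -> (forall t, g t = g' t) -> rhs_set m g'.
Proof. by move=> [c hc] e; exists c => t; rewrite -e hc. Qed.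

Lemma rhs_scale (F : finFieldType) (h3 : 3%N \in [pchar F]) m (k : 'F_3) (g : F -> F) :
  rhs_set m g -> rhs_set m (fun t => embF3 F k * g t).
Proof.
move=> [c hc]; exists (fun i => embF3 F k * c i) => t.
rewrite hc mulr_sumr; apply: eq_bigr => i _.
by rewrite -mulrA trZ.
Qed.

Lemma rhs_sum (F : finFieldType) (h3 : 3%N \in [pchar F]) m n (h : 'I_n -> F -> F) :
  (forall i, rhs_set m (h i)) -> rhs_set m (fun t => \sum_(i < n) h i t).
Proof.
elim: n h => [|n IH] h hh.
  exists (fun _ => 0) => t; rewrite big_ord0 big1 // => i _.
  by rewrite mul0r tr0.
have [c1 hc1] := IH (fun i => h (widen_ord (leqnSn n) i)) (fun i => hh _).
have [c2 hc2] := hh ord_max.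
exists (fun i => c1 i + c2 i) => t.
rewrite big_ord_recr /= hc1 hc2 -big_split /=; apply: eq_bigr => i _.
by rewrite mulrDl trD.
Qed.

Lemma gen_rhs (F : finFieldType) (h3 : 3%N \in [pchar F]) m
  (hq : forall x : F, x ^+ (3 ^ (2 * m)) = x) (f : F -> F) :
  gen_family m f -> rhs_set m f.
Proof.
move=> [a [b [ha [_ hf]]]].
exists (fun i => - (a ^+ (3 ^ i) * b)) => t.
rewrite hf key // -sumrN; apply: eq_bigr => i _.
by rewrite mulNr trN.
Qed.

Lemma span_ext (F : finFieldType) (S : (F -> F) -> Prop) (g g' : F -> F) :
  in_F3span S g -> (forall t, g t = g' t) -> in_F3span S g'.
Proof.
by move=> [n [k [fs [h1 h2]]]] e; exists n, k, fs; split => // t; rewrite -e h2.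
Qed.

Lemma span_gen (F : finFieldType) (S : (F -> F) -> Prop) (f : F -> F) :
  S f -> in_F3span S f.
Proof.
move=> hf; exists 1%N, (fun _ => 1), (fun _ => f); split => // t.
by rewrite big_ord1 /embF3 /= mul1r.
Qed.

Lemma span_add (F : finFieldType) (S : (F -> F) -> Prop) (g1 g2 : F -> F) :
  in_F3span S g1 -> in_F3span S g2 -> in_F3span S (fun t => g1 t + g2 t).
Proof.
move=> [n1 [k1 [fs1 [h1 e1]]]] [n2 [k2 [fs2 [h2 e2]]]].
exists (n1 + n2)%N,
  (fun i => match split i with inl j => k1 j | inr j => k2 j end),
  (fun i => match split i with inl j => fs1 j | inr j => fs2 j end).
split.
  by move=> i; case: (split i).
move=> t; rewrite big_split_ord e1 e2; congr (_ + _); apply: eq_bigr => j _.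
  by rewrite (unsplitK (inl _ j)).
by rewrite (unsplitK (inr _ j)).
Qed.

Lemma span_sum (F : finFieldType) (S : (F -> F) -> Prop) n (h : 'I_n -> F -> F) :
  (forall i, in_F3span S (h i)) -> in_F3span S (fun t => \sum_(i < n) h i t).
Proof.
elim: n h => [|n IH] h hh.
  exists 0%N, (fun _ => 0), (fun _ _ => 0); split; first by case.
  by move=> t; rewrite !big_ord0.
apply: span_ext; first apply: span_add.
- exact: (IH (fun i => h (widen_ord (leqnSn n) i)) (fun i => hh _)).
- exact: (hh ord_max).
by move=> t /=; rewrite big_ord_recr.
Qed.

Lemma nodvd m i i0 : (i < m)%N -> (i0 < m)%N -> i != i0 ->
  ~~ ((3 ^ m - 1) %| 3 ^ i + (3 ^ m - 1 - 3 ^ i0))%N.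
Proof.
move=> him hi0 hne.
have hx : (3 * 3 ^ i <= 3 ^ m)%N by rewrite -expnS leq_pexp2l.
have hy : (3 * 3 ^ i0 <= 3 ^ m)%N by rewrite -expnS leq_pexp2l.
have x1 : (0 < 3 ^ i)%N by rewrite expn_gt0.
have y1 : (0 < 3 ^ i0)%N by rewrite expn_gt0.
have nxy : (3 ^ i != 3 ^ i0)%N by rewrite eqn_exp2l.
move: hx hy x1 y1 nxy; set x := (3 ^ i)%N; set y := (3 ^ i0)%N; set q := (3 ^ m)%N.
move=> hx hy x1 y1 /eqP nxy.
apply/negP => /dvdnP [k hk].
case: k hk => [|[|k]] hk; nia.
Qed.

Lemma single (F : finFieldType) (h3 : 3%N \in [pchar F]) m (hm : (0 < m)%N)
  (hq : forall x : F, x ^+ (3 ^ (2 * m)) = x) (lam : F)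
  (hlam : (3 ^ m - 1).-primitive_root lam) (i0 : 'I_m) (c : F) :
  in_F3span (gen_family m) (fun t => trace2m m (c * t ^+ ((3 ^ m + 1) * 3 ^ i0 + 1))).
Proof.
set Q := (3 ^ m - 1)%N.
have hQ : (3 ^ m = Q.+1)%N.
  by rewrite /Q subn1 prednK // expn_gt0.
have hy : (3 ^ i0 <= Q)%N.
  have : (3 * 3 ^ i0 <= 3 ^ m)%N by rewrite -expnS leq_pexp2l.
  have : (0 < 3 ^ i0)%N by rewrite expn_gt0.
  rewrite hQ; lia.
set d := (Q - 3 ^ i0)%N.
have lQ : lam ^+ Q = 1 := prim_expr_order hlam.
have Q0 : (0 < Q)%N := prim_order_gt0 hlam.
have lam0 : lam != 0.
  have Qn0 : (Q == 0%N) = false by apply/negbTE; rewrite -lt0n.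
  apply/eqP => l0; move: lQ; rewrite l0 expr0n Qn0.
  by move=> /eqP; rewrite eq_sym oner_eq0.
pose fs (j : 'I_Q) := fun t : F => trace2m m (lam ^+ j * t ^+ (3 ^ m + 1)) *
                                   trace2m m ((c * lam ^+ (j * d)) * t).
apply: span_ext.
  apply: (@span_sum _ _ Q fs) => j; apply: span_gen.
  exists (lam ^+ j), (c * lam ^+ (j * d)); split; last split => //.
  - by rewrite exprAC hQ exprS lQ mulr1.
  - by rewrite expf_neq0.
move=> t /=; rewrite /fs.
have hlj : forall j : nat, (lam ^+ j) ^+ (3 ^ m) = lam ^+ j.
  by move=> j; rewrite exprAC hQ exprS lQ mulr1.
under eq_bigr => j _ do rewrite key ?hlj //.
rewrite sumrN exchange_big /=.
under eq_bigr => i _ do rewrite -tr_sum //.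
have S : forall i : 'I_m, \sum_(j < Q) (lam ^+ j) ^+ (3 ^ i) * (c * lam ^+ (j * d)) *
            t ^+ ((3 ^ m + 1) * 3 ^ i + 1)
       = c * t ^+ ((3 ^ m + 1) * 3 ^ i + 1) * (if i == i0 then -1 else 0).
  move=> i.
  under eq_bigr => j _ do rewrite -!exprM [(j * d)%N]mulnC [(j * 3 ^ i)%N]mulnC.
  have -> : \sum_(j < Q) lam ^+ (3 ^ i * j) * (c * lam ^+ (d * j)) *
              t ^+ ((3 ^ m + 1) * 3 ^ i + 1) =
            c * t ^+ ((3 ^ m + 1) * 3 ^ i + 1) * \sum_(j < Q) (lam ^+ (3 ^ i + d)) ^+ j.
    rewrite mulr_sumr; apply: eq_bigr => j _.
    by rewrite -exprM [((3 ^ i + d) * j)%N]mulnDl [lam ^+ (_ + _)]exprD; ring.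
  congr (_ * _).
  case: eqP => [-> | /eqP ne].
    rewrite /d subnKC // lQ.
    under eq_bigr => j _ do rewrite expr1n.
    rewrite sumr_const card_ord.
    have : (Q.+1%:R : F) = 0 by rewrite -hQ natrX (pcharf0 h3) expr0n (_ : (m == 0%N) = false) //; apply/negbTE; rewrite -lt0n.
    by rewrite -natr1 => /eqP; rewrite addr_eq0 => /eqP.
  set mu := lam ^+ (3 ^ i + d).
  have mu1 : mu != 1.
    rewrite /mu -(prim_order_dvd hlam); apply: nodvd => //.
  have muQ : mu ^+ Q = 1 by rewrite /mu exprAC lQ expr1n.
  have := subrX1 mu Q; rewrite muQ subrr => /esym /eqP.
  by rewrite mulf_eq0 subr_eq0 (negbTE mu1) /= => /eqP.
under eq_bigr => i _ do rewrite S.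
rewrite (bigD1 i0) //= eqxx big1 ?addr0.
  by rewrite mulrN1 trN // opprK.
by move=> i /negbTE ->; rewrite mulr0 tr0.
Qed.

Lemma prim_exists (F : finFieldType) : exists z : F, (#|F|.-1).-primitive_root z.
Proof.
have cF : (0 < #|F|)%N by apply/card_gt0P; exists 0.
have hall : all (#|F|.-1).-unity_root (enum (predC1 (0 : F))).
  apply/allP => x; rewrite mem_enum /= => hx; rewrite unity_rootE.
  have := expf_card x; rewrite -(prednK cF) exprS /= => E.
  by apply/eqP; apply: (mulfI hx); rewrite mulr1.
have hs : (#|F|.-1 <= size (enum (predC1 (0%R : F))))%N by rewrite -cardE cardC1.
have n0 : (0 < #|F|.-1)%N by rewrite -ltnS prednK // finNzRing_gt1.
case/hasP: (cyclic.has_prim_root n0 hall (enum_uniq _) hs) => z _ hz.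
by exists z.
Qed.

Theorem lemma3p13 (F : finFieldType) (m : nat) (hm : (2 <= m)%N)
    (hF : #|F| = (3 ^ (2 * m))%N) :
  forall g : F -> F, in_F3span (gen_family m) g <-> rhs_set m g.
Proof.
have h3 : 3%N \in [pchar F] by apply: (card_finPcharP hF).
have hq : forall x : F, x ^+ (3 ^ (2 * m)) = x by move=> x; rewrite -hF expf_card.
have hm0 : (0 < m)%N by apply: leq_trans hm.
have [z hz] := prim_exists F.
have q1 : (0 < 3 ^ m)%N by rewrite expn_gt0.
have eF : (#|F|.-1 = (3 ^ m + 1) * (3 ^ m - 1))%N.
  rewrite hF mul2n -addnn expnD; move: q1; set q := (3 ^ m)%N => q1; nia.
have hlam := exp_prim_root hz (3 ^ m + 1).
rewrite eF gcdnMr mulKn ?addn1 // -addn1 in hlam.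
move=> g; split.
- move=> [n [k [fs [hS hg]]]].
  apply: rhs_ext.
    apply: (@rhs_sum _ h3 m n (fun i t => embF3 F (k i) * fs i t)) => i.
    exact: (rhs_scale h3 (k i) (gen_rhs h3 hq (hS i))).
  by move=> t; rewrite hg.
- move=> [c hc].
  apply: span_ext.
    apply: (@span_sum _ _ m (fun i t => trace2m m (c i * t ^+ ((3 ^ m + 1) * 3 ^ i + 1)))) => i.
    exact: (single h3 hm0 hq hlam i (c i)).
  by move=> t; rewrite hc.
Qed.
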